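(* Let $\mathcal{H}$ be a complex separable Hilbert space, let $\mathcal{A}=(A_n)_{n\ge 0}$ be a sequence of positive invertible bounded operators on $\mathcal{H}$ with $\sup_n\|A_n\|<\infty$, and let $W_{\mathcal A}$ be the associated operator-valued weighted shift on $\ell^2(\mathcal H)$. Let $k\ge 1$ be an integer. Then $W_{\mathcal A}$ is $k$-hyponormal if and only if $W_{\mathcal A}$ is $k_E$-hyponormal.
   Context: $\ell^2(\mathcal H)=\{(x_n)_{n\ge0}: x_n\in\mathcal H,\ \sum_n\|x_n\|^2<\infty\}$ with inner product $\langle x,y\rangle=\sum_n\langle x_n,y_n\rangle$. The operator-valued weighted shift is $W_{\mathcal A}(x_0,x_1,x_2,\dots)=(0,A_0x_0,A_1x_1,\dots)$. A bounded operator $T$ is $k$-hyponormal if the operator matrix $(T^{*j}T^{i})_{0\le i,j\le k}$ is positive (equivalently $([T^{*j},T^i])_{1\le i,j\le k}\ge0$, where $[X,Y]=XY-YX$), and $k_E$-hyponormal (Embry $k$-hyponormal) if the operator matrix $(T^{*(i+j)}T^{i+j})_{0\le i,j\le k}$ is positive. *)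

(* Defs.v *)
From HB Require Import structures.
From mathcomp Require Import all_boot all_order all_algebra.
From mathcomp Require Import complex.
From mathcomp Require Import all_classical all_reals all_analysis.
Set Implicit Arguments. Unset Strict Implicit. Unset Printing Implicit Defensive.
Import Order.TTheory GRing.Theory Num.Theory.
Import numFieldNormedType.Exports.
Local Open Scope ring_scope.
Local Open Scope complex_scope.

Section Hilbert.
Variables (R : realType) (H : lmodType R[i]) (ip : H -> H -> R[i]).

Definition hnorm (x : H) : R := Num.sqrt (complex.Re (ip x x)).

Definition is_inner_product : Prop :=
  [/\ (forall (a : R[i]) x y z, ip (a *: x + y) z = a * ip x z + ip y z),
      (forall x y, ip y x = conjc (ip x y)),
      (forall x, 0 <= ip x x) &
      (forall x, ip x x = 0 -> x = 0)].

Definition hcauchy (u : nat -> H) : Prop :=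
  forall e : R, 0 < e -> exists N, forall m n, (N <= m)%N -> (N <= n)%N ->
    hnorm (u m - u n) < e.

Definition hconverges (u : nat -> H) (l : H) : Prop :=
  forall e : R, 0 < e -> exists N, forall n, (N <= n)%N -> hnorm (u n - l) < e.

Definition complex_separable_hilbert : Prop :=
  [/\ is_inner_product,
      (forall u, hcauchy u -> exists l, hconverges u l) &
      (exists d : nat -> H, forall x (e : R), 0 < e -> exists n, hnorm (x - d n) < e)].

Definition bounded_op (T : H -> H) : Prop :=
  exists M : R, forall x, hnorm (T x) <= M * hnorm x.

Definition positive_op (T : H -> H) : Prop := forall x, 0 <= ip (T x) x.

Definition invertible_op (T : H -> H) : Prop :=
  exists B : {linear H -> H}, bounded_op B /\ cancel T B /\ cancel B T.

Definition l2 (x : nat -> H) : Prop :=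
  cvgn (series (fun n => hnorm (x n) ^+ 2) : R^nat).

Definition l2ip (x y : nat -> H) : R[i] :=
  Complex (limn (series (fun n => complex.Re (ip (x n) (y n))) : R^nat))
          (limn (series (fun n => complex.Im (ip (x n) (y n))) : R^nat)).

Definition l2_adjoint (T S : (nat -> H) -> (nat -> H)) : Prop :=
  (forall x, l2 x -> l2 (S x)) /\
  (forall x y, l2 x -> l2 y -> l2ip (T x) y = l2ip x (S y)).

Definition op_matrix_pos (k : nat)
    (M : 'I_k.+1 -> 'I_k.+1 -> (nat -> H) -> (nat -> H)) : Prop :=
  forall x : 'I_k.+1 -> nat -> H, (forall i, l2 (x i)) ->
    0 <= \sum_(i < k.+1) \sum_(j < k.+1) l2ip (M i j (x j)) (x i).

Definition k_hyponormal (k : nat) (T : (nat -> H) -> (nat -> H)) : Prop :=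
  forall S, l2_adjoint T S ->
    @op_matrix_pos k (fun i j => fun x => iter j S (iter i T x)).

Definition kE_hyponormal (k : nat) (T : (nat -> H) -> (nat -> H)) : Prop :=
  forall S, l2_adjoint T S ->
    @op_matrix_pos k (fun i j => fun x => iter (i + j) S (iter (i + j) T x)).

End Hilbert.

Definition wshift (R : realType) (H : lmodType R[i]) (A : nat -> H -> H)
    (x : nat -> H) : nat -> H :=
  fun n => match n with 0%N => 0 | m.+1 => A m (x m) end.

(* Main.v *)
Require Import Defs.
From HB Require Import structures.
From mathcomp Require Import all_boot all_order all_algebra.
From mathcomp Require Import complex.
From mathcomp Require Import all_classical all_reals all_analysis.
From mathcomp Require Import zify lra.
Import Order.TTheory GRing.Theory Num.Theory.
Import numFieldNormedType.Exports.
Local Open Scope ring_scope.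
Local Open Scope complex_scope.
Set Implicit Arguments. Unset Strict Implicit. Unset Printing Implicit Defensive.

Section RealSeries.
Variable R : realType.
Implicit Types a b : nat -> R.

Lemma RS_shiftE a b c : (forall m, a m = b (m + c)%N) ->
  (forall p, (p < c)%N -> b p = 0) ->
  forall n, series b (n + c)%N = series a n.
Proof.
move=> hab hb n.
rewrite /series /= (@big_cat_nat _ _ _ c) //=; last by rewrite leq_addl.
rewrite big_nat_cond big1 ?add0r; last first.
  by move=> i /andP[/andP[_ hi] _]; rewrite hb.
rewrite -{1}(add0n c) big_addn addnK.
by apply: eq_bigr => i _; rewrite hab.
Qed.

Lemma RS_shift a b c : (forall m, a m = b (m + c)%N) ->
  (forall p, (p < c)%N -> b p = 0) ->
  (cvgn (series a) <-> cvgn (series b)) /\ (cvgn (series b) -> limn (series a) = limn (series b)).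
Proof.
move=> hab hb.
have E : series a = (fun n => series b (n + c)%N).
  by apply: funext => n; rewrite (@RS_shiftE a b c hab hb).
have K : forall l : R, (series a @ \oo --> l)%classic <-> (series b @ \oo --> l)%classic.
  move=> l; rewrite E.
  by rewrite (cvg_shiftn c (series b) (nbhs l)).
split.
  split => h.
    by apply: (@cvgP _ _ (limn (series a))); apply/K.
  by apply: (@cvgP _ _ (limn (series b))); apply/K.
move=> hc.
by apply: cvg_lim => //; apply/K.
Qed.

Lemma RS_single a N : (forall m, m != N -> a m = 0) ->
  cvgn (series a) /\ limn (series a) = a N.
Proof.
move=> ha.
have E : forall n, series a (n + N.+1)%N = a N.
  move=> n; rewrite /series /= (@big_cat_nat _ _ _ N.+1) //=; last by rewrite leq_addl.
  rewrite big_nat_recr //= big_nat_cond big1 ?add0r; last first.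
    by move=> i /andP[/andP[_ hi] _]; rewrite ha // ltn_eqF.
  rewrite big_nat_cond big1 ?addr0 // => i /andP[/andP[hi _] _].
  by rewrite ha // gtn_eqF.
have K : (series a @ \oo --> a N)%classic.
  rewrite -(cvg_shiftn N.+1 (series a) (nbhs (a N))).
  have -> : [sequence series a (n + N.+1)%N]_n = (fun _ => a N).
    by apply: funext => n /=; rewrite E.
  exact: cvg_cst.
split; first by apply: (@cvgP _ _ (a N)); exact: K.
exact: cvg_lim.
Qed.

Lemma RS_sum (I : Type) (r : seq I) (F : I -> nat -> R) :
  (forall i, cvgn (series (F i))) ->
  cvgn (series (fun p => \sum_(i <- r) F i p)) /\
  limn (series (fun p => \sum_(i <- r) F i p)) = \sum_(i <- r) limn (series (F i)).
Proof.
move=> hF; elim: r => [|x r [IH1 IH2]].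
  have -> : series (fun p => \sum_(i <- [::]) F i p) = (fun _ => 0 : R).
    apply: funext => n; rewrite /series /= big1 // => i _; by rewrite big_nil.
  rewrite big_nil; split; [exact: is_cvg_cst | exact: lim_cst].
have -> : (fun p => \sum_(i <- x :: r) F i p) = F x + (fun p => \sum_(i <- r) F i p).
  by apply: funext => p; rewrite big_cons.
split; first exact: is_cvg_seriesD.
by rewrite lim_seriesD // IH2 big_cons.
Qed.

Lemma RS_ge0 a : (forall p, 0 <= a p) -> cvgn (series a) -> 0 <= limn (series a).
Proof.
move=> ha hc; apply: limr_ge => //.
by apply: nearW => n; apply: sumr_ge0 => i _.
Qed.

Lemma RS_0 a : (forall p, a p = 0) -> limn (series a) = 0.
Proof.
move=> ha; have -> : series a = (fun _ => 0 : R).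
  by apply: funext => n; rewrite /series /= big1.
exact: lim_cst.
Qed.

Lemma RS_N a : cvgn (series a) ->
  cvgn (series (fun n => - a n)) /\ limn (series (fun n => - a n)) = - limn (series a).
Proof.
move=> hc.
have -> : series (fun n => - a n) = - series a.
  by apply: funext => n; rewrite /series /= sumrN.
split; first exact: is_cvgN.
exact: limN.
Qed.

End RealSeries.

Section ComplexSeries.
Variable R : realType.
Implicit Types a b : nat -> R[i].

Lemma ReD (u v : R[i]) : complex.Re (u + v) = complex.Re u + complex.Re v.
Proof. by case: u => ? ?; case: v. Qed.
Lemma ImD (u v : R[i]) : complex.Im (u + v) = complex.Im u + complex.Im v.
Proof. by case: u => ? ?; case: v. Qed.
Lemma Re0 : complex.Re (0 : R[i]) = 0. Proof. by []. Qed.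
Lemma Im0 : complex.Im (0 : R[i]) = 0. Proof. by []. Qed.
Lemma ReSum (I : Type) (r : seq I) (F : I -> R[i]) :
  complex.Re (\sum_(i <- r) F i) = \sum_(i <- r) complex.Re (F i).
Proof. by elim/big_rec2: _ => // i y1 y2 _ <-; rewrite ReD. Qed.
Lemma ImSum (I : Type) (r : seq I) (F : I -> R[i]) :
  complex.Im (\sum_(i <- r) F i) = \sum_(i <- r) complex.Im (F i).
Proof. by elim/big_rec2: _ => // i y1 y2 _ <-; rewrite ImD. Qed.
Lemma complex_eqP (u v : R[i]) : complex.Re u = complex.Re v -> complex.Im u = complex.Im v -> u = v.
Proof. by case: u => ? ?; case: v => ? ? /= -> ->. Qed.

Definition ccvg a := cvgn (series (fun n => complex.Re (a n))) /\
                     cvgn (series (fun n => complex.Im (a n))).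
Definition CL a : R[i] := Complex (limn (series (fun n => complex.Re (a n))))
                                  (limn (series (fun n => complex.Im (a n)))).

Lemma CL_shift a b c : (forall m, a m = b (m + c)%N) ->
  (forall p, (p < c)%N -> b p = 0) ->
  (ccvg a <-> ccvg b) /\ (ccvg b -> CL a = CL b).
Proof.
move=> hab hb.
have [h1 h2] := @RS_shift R (fun n => complex.Re (a n)) (fun n => complex.Re (b n)) c
   (fun m => congr1 _ (hab m)) (fun p hp => congr1 _ (hb p hp)).
have [h3 h4] := @RS_shift R (fun n => complex.Im (a n)) (fun n => complex.Im (b n)) c
   (fun m => congr1 _ (hab m)) (fun p hp => congr1 _ (hb p hp)).
split.
  rewrite /ccvg; split => -[? ?]; split; (try by apply/h1); by apply/h3.
by move=> [? ?]; rewrite /CL h2 // h4.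
Qed.

Lemma CL_single a N : (forall m, m != N -> a m = 0) -> ccvg a /\ CL a = a N.
Proof.
move=> ha.
have [h1 h2] : cvgn (series (fun n => complex.Re (a n))) /\
    limn (series (fun n => complex.Re (a n))) = complex.Re (a N).
  by apply: RS_single => m hm; rewrite ha.
have [h3 h4] : cvgn (series (fun n => complex.Im (a n))) /\
    limn (series (fun n => complex.Im (a n))) = complex.Im (a N).
  by apply: RS_single => m hm; rewrite ha.
split; first by [].
by rewrite /CL h2 h4; case: (a N).
Qed.

Lemma CL_sum (I : Type) (r : seq I) (F : I -> nat -> R[i]) :
  (forall i, ccvg (F i)) ->
  ccvg (fun p => \sum_(i <- r) F i p) /\
  CL (fun p => \sum_(i <- r) F i p) = \sum_(i <- r) CL (F i).
Proof.
move=> hF.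
have [h1 h2] := @RS_sum R I r (fun i n => complex.Re (F i n)) (fun i => (hF i).1).
have [h3 h4] := @RS_sum R I r (fun i n => complex.Im (F i n)) (fun i => (hF i).2).
have e1 : (fun n => complex.Re (\sum_(i <- r) F i n)) = (fun n => \sum_(i <- r) complex.Re (F i n)).
  by apply: funext => n; rewrite ReSum.
have e2 : (fun n => complex.Im (\sum_(i <- r) F i n)) = (fun n => \sum_(i <- r) complex.Im (F i n)).
  by apply: funext => n; rewrite ImSum.
split; first by rewrite /ccvg e1 e2.
apply: complex_eqP; rewrite ?ReSum ?ImSum /CL /=.
  by rewrite e1 h2.
by rewrite e2 h4.
Qed.

Lemma CL_ge0 a : (forall p, 0 <= a p) -> ccvg a -> 0 <= CL a.
Proof.
move=> ha [c1 c2].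
have hR : forall p, complex.Im (a p) = 0 /\ 0 <= complex.Re (a p).
  by move=> p; move: (ha p); rewrite lecE => /andP[/eqP -> ->].
rewrite lecE /=; apply/andP; split.
  by apply/eqP; rewrite RS_0 // => p; case: (hR p).
by apply: RS_ge0 => // p; case: (hR p).
Qed.

Lemma CL_conj a : ccvg a -> ccvg (fun n => conjc (a n)) /\
  CL (fun n => conjc (a n)) = conjc (CL a).
Proof.
move=> [c1 c2].
have e1 : (fun n => complex.Re (conjc (a n))) = (fun n => complex.Re (a n)).
  by apply: funext => n; case: (a n).
have e2 : (fun n => complex.Im (conjc (a n))) = (fun n => - complex.Im (a n)).
  by apply: funext => n; case: (a n).
have [h3 h4] := @RS_N R _ c2.
split; first by rewrite /ccvg e1 e2.
by rewrite /CL e1 e2 h4.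
Qed.

End ComplexSeries.

Section Hil.
Variables (R : realType) (H : lmodType R[i]) (ip : H -> H -> R[i]).
Hypothesis hip : is_inner_product ip.

Lemma conjD (u v : R[i]) : conjc (u + v) = conjc u + conjc v.
Proof. by case: u => ? ?; case: v => ? ? /=; rewrite opprD. Qed.
Lemma conjN (u : R[i]) : conjc (- u) = - conjc u.
Proof. by case: u. Qed.
Lemma ipDl x y z : ip (x + y) z = ip x z + ip y z.
Proof. by case: hip => L _ _ _; have := L 1 x y z; rewrite scale1r mul1r. Qed.
Lemma ip0l z : ip 0 z = 0.
Proof.
have h := ipDl 0 0 z; rewrite addr0 in h.
by have := congr1 (fun t => t - ip 0 z) h; rewrite subrr addrK => ->.
Qed.
Lemma ipZl a x z : ip (a *: x) z = a * ip x z.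
Proof. by case: hip => L _ _ _; have := L a x 0 z; rewrite addr0 ip0l addr0. Qed.
Lemma ipNl x z : ip (- x) z = - ip x z.
Proof. by rewrite -scaleN1r ipZl mulN1r. Qed.
Lemma ipC x y : ip y x = conjc (ip x y).
Proof. by case: hip => _ C _ _; apply: C. Qed.
Lemma ipDr z x y : ip z (x + y) = ip z x + ip z y.
Proof. by rewrite ipC ipDl conjD -!ipC. Qed.
Lemma ip0r z : ip z 0 = 0.
Proof. by rewrite ipC ip0l conjc0. Qed.
Lemma ipNr x z : ip z (- x) = - ip z x.
Proof. by rewrite ipC ipNl conjN -ipC. Qed.
Lemma ReN (u : R[i]) : complex.Re (- u) = - complex.Re u. Proof. by case: u. Qed.
Lemma ImN (u : R[i]) : complex.Im (- u) = - complex.Im u. Proof. by case: u. Qed.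
Lemma ReC x y : complex.Re (ip y x) = complex.Re (ip x y).
Proof. by rewrite ipC; case: (ip x y). Qed.
Lemma ImC x y : complex.Im (ip y x) = - complex.Im (ip x y).
Proof. by rewrite ipC; case: (ip x y). Qed.
Lemma ipxx x : complex.Im (ip x x) = 0 /\ 0 <= complex.Re (ip x x).
Proof.
by case: hip => _ _ P _; move: (P x); rewrite lecE => /andP[/eqP -> ->].
Qed.
Lemma hnorm2 x : hnorm ip x ^+ 2 = complex.Re (ip x x).
Proof. by rewrite /hnorm sqr_sqrtr //; case: (ipxx x). Qed.
Lemma hnorm0 : hnorm ip 0 = 0.
Proof. by rewrite /hnorm ip0l /= sqrtr0. Qed.
Lemma hnorm_ge0 x : 0 <= hnorm ip x.
Proof. exact: sqrtr_ge0. Qed.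

Lemma ReBound x y : `|complex.Re (ip x y)| <= complex.Re (ip x x) + complex.Re (ip y y).
Proof.
have [_ p] := ipxx (x + y).
have [_ q] := ipxx (x - y).
have [_ a] := ipxx x.
have [_ b] := ipxx y.
rewrite !ipDl !ipDr !ipNl !ipNr !ReD !ReN opprK (ReC y x) in p q.
rewrite (ReC y x) ler_norml; apply/andP; split; lra.
Qed.

Lemma ImBound x y : `|complex.Im (ip x y)| <= complex.Re (ip x x) + complex.Re (ip y y).
Proof.
set c : R[i] := 0 +i* (-1).
have e1 : complex.Im (ip x y) = complex.Re (ip (c *: x) y).
  by rewrite ipZl /c; case: (ip x y) => a b /=; lra.
have e2 : complex.Re (ip (c *: x) (c *: x)) = complex.Re (ip x x).
  rewrite ipZl (ipC (c *: x)) ipZl.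
  have [h _] := ipxx x; move: h.
  by rewrite /c; case: (ip x x) => a b /= ->; lra.
by rewrite e1 -e2; apply: ReBound.
Qed.

Lemma l2_sum_cvg x y : l2 ip x -> l2 ip y ->
  cvgn (series (fun n => complex.Re (ip (x n) (x n)) + complex.Re (ip (y n) (y n)))).
Proof.
move=> hx hy.
have -> : (fun n => complex.Re (ip (x n) (x n)) + complex.Re (ip (y n) (y n))) =
   (fun n => hnorm ip (x n) ^+ 2 + hnorm ip (y n) ^+ 2).
  by apply: funext => n; rewrite !hnorm2.
exact: (is_cvg_seriesD hx hy).
Qed.

Lemma ip_ccvg x y : l2 ip x -> l2 ip y -> ccvg (fun n => ip (x n) (y n)).
Proof.
move=> hx hy; have hs := l2_sum_cvg hx hy.
have h0 : forall n, 0 <= complex.Re (ip (x n) (x n)) + complex.Re (ip (y n) (y n)).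
  by move=> n; apply: addr_ge0; [case: (ipxx (x n)) | case: (ipxx (y n))].
split; apply: normed_cvg.
  exact: (@series_le_cvg R (fun n => `|complex.Re (ip (x n) (y n))|) _
     (fun n => normr_ge0 _) h0 (fun n => ReBound _ _) hs).
exact: (@series_le_cvg R (fun n => `|complex.Im (ip (x n) (y n))|) _
     (fun n => normr_ge0 _) h0 (fun n => ImBound _ _) hs).
Qed.

Lemma l2_single x N : (forall m, m != N -> x m = 0) -> l2 ip x.
Proof.
move=> hx; rewrite /l2.
have [h _] : cvgn (series (fun n => hnorm ip (x n) ^+ 2)) /\
    limn (series (fun n => hnorm ip (x n) ^+ 2)) = hnorm ip (x N) ^+ 2.
  by apply: RS_single => m hm; rewrite hx // hnorm0 expr0n.
exact: h.
Qed.

End Hil.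

Section Ops.
Variables (R : realType) (H : lmodType R[i]) (ip : H -> H -> R[i]).
Hypothesis hip : is_inner_product ip.
Variable A : nat -> {linear H -> H}.
Local Notation T := (wshift (fun n => A n)).

Fixpoint Pw (n i : nat) (y : H) : H :=
  match i with 0 => y | i'.+1 => A (n + i') (Pw n i' y) end.

Lemma Pw0 n i : Pw n i 0 = 0.
Proof. by elim: i => //= i ->; rewrite linear0. Qed.

Lemma PwC n j i y : Pw (n + j) i (Pw n j y) = Pw n (j + i) y.
Proof. by elim: i => [|i IH] /=; rewrite ?addn0 // IH addnS /= addnA. Qed.

Lemma iterT i x m : iter i T x m = if (i <= m)%N then Pw (m - i)%N i (x (m - i)%N) else 0.
Proof.
elim: i m => [|i IH] m; first by rewrite /= subn0.
change (iter i.+1 T x m) with (T (iter i T x) m); case: m => [|m] //=.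
rewrite IH; case: (leqP i m) => h.
  by rewrite ltnS h subSS subnK.
by rewrite ltnS leqNgt h /= linear0.
Qed.

Lemma iterT_single i N y : iter i T (fun m => if m == N then y else 0) =
  (fun m => if m == (N + i)%N then Pw N i y else 0).
Proof.
apply: funext => m; rewrite iterT.
case: (leqP i m) => h.
  case: eqP => e; case: eqP => e'; try (by rewrite e); try lia.
  by rewrite Pw0.
by case: eqP => e //; lia.
Qed.

Lemma Pw_surj : (forall n, invertible_op ip (A n)) ->
  forall n i z, exists y, Pw n i y = z.
Proof.
move=> hinv n i; elim: i => [|i IH] z; first by exists z.
have [B [_ [_ hB]]] := hinv (n + i)%N.
have [y hy] := IH (B z).
by exists y => /=; rewrite hy hB.
Qed.

Lemma l2T (M : R) : (forall n x, hnorm ip (A n x) <= M * hnorm ip x) ->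
  forall x, l2 ip x -> l2 ip (T x).
Proof.
move=> hM x hx; rewrite /l2.
have h1 : forall m, (fun m => hnorm ip (A m (x m)) ^+ 2) m = (fun n => hnorm ip (T x n) ^+ 2) (m + 1)%N.
  by move=> m; rewrite addn1.
have h2 : forall p, (p < 1)%N -> (fun n => hnorm ip (T x n) ^+ 2) p = 0.
  by case=> //= _; rewrite (hnorm0 hip) expr0n.
have [e _] := RS_shift h1 h2.
apply/e.
have hb : forall m, hnorm ip (A m (x m)) ^+ 2 <= M ^+ 2 * hnorm ip (x m) ^+ 2.
  move=> m; have g1 := hM m (x m); have g2 := hnorm_ge0 ip (A m (x m)).
  have h3 := hnorm_ge0 ip (x m).
  rewrite -exprMn; nra.
have hv : cvgn (series (fun m => M ^+ 2 * hnorm ip (x m) ^+ 2)).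
  exact: (@is_cvg_seriesZ _ _ (M ^+ 2) hx).
have := (@series_le_cvg R _ (fun m => M ^+ 2 * hnorm ip (x m) ^+ 2)
   (fun m => exprn_ge0 _ (hnorm_ge0 ip _))
   (fun m => mulr_ge0 (sqr_ge0 M) (exprn_ge0 _ (hnorm_ge0 ip _))) hb hv).
move=> hh; exact: hh.
Qed.

Lemma l2iterT (M : R) : (forall n x, hnorm ip (A n x) <= M * hnorm ip x) ->
  forall i x, l2 ip x -> l2 ip (iter i T x).
Proof. by move=> hM; elim=> [|i IH] x hx //=; apply: (l2T hM); apply: IH. Qed.

Lemma l2ip_conj x y : l2 ip x -> l2 ip y -> l2ip ip y x = conjc (l2ip ip x y).
Proof.
move=> hx hy.
have [_ h] := CL_conj (ip_ccvg hip hx hy).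
have e : (fun n => conjc (ip (x n) (y n))) = (fun n => ip (y n) (x n)).
  by apply: funext => n; rewrite -(ipC hip).
rewrite e in h; exact: h.
Qed.

Lemma adj_iter (M : R) (hM : forall n x, hnorm ip (A n x) <= M * hnorm ip x)
  S (hS : l2_adjoint ip T S) j u v : l2 ip u -> l2 ip v ->
  l2ip ip (iter j S u) v = l2ip ip u (iter j T v).
Proof.
have hSl : forall j w, l2 ip w -> l2 ip (iter j S w).
  by elim=> [|j' IH] w hw //=; apply: hS.1; apply: IH.
elim: j v => [|j IH] v hu hv //=.
have hw := hSl j u hu.
rewrite (l2ip_conj hv (hS.1 _ hw)) -(hS.2 _ _ hv hw).
have hTv : l2 ip (T v) by apply: (l2T hM).
by rewrite (l2ip_conj hw hTv) conjcK IH // -iterSr.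
Qed.

Lemma if_neg_0 (a : H) (m N : nat) : m != N -> (if m == N then a else 0) = 0.
Proof. by move/negbTE => ->. Qed.

Lemma l2ip_single N a b :
  l2ip ip (fun m => if m == N then a else 0) (fun m => if m == N then b else 0) = ip a b.
Proof.
have [_ h] := @CL_single R (fun m => ip (if m == N then a else 0) (if m == N then b else 0)) N
  (fun m hm => eq_ind_r (fun t => ip t _ = 0) (ip0l hip _) (if_neg_0 a hm)).
by rewrite /l2ip; move: h; rewrite /CL eqxx.
Qed.

End Ops.

Section Reindex.
Variable V : zmodType.

Lemma RL1 (G : nat -> V) r n :
  \sum_(i < n) (if (r <= i)%N then G i else 0) = \sum_(i < n - r) G (i + r)%N.
Proof.
elim: n => [|n IH]; first by rewrite !big_ord0.
rewrite big_ord_recr /= IH.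
case: (leqP r n) => h.
  by rewrite subSn // big_ord_recr /= subnK.
have -> : (n.+1 - r = 0)%N by lia.
have -> : (n - r = 0)%N by lia.
by rewrite !big_ord0 addr0.
Qed.

Lemma RL2m (G : nat -> V) r k n :
  \sum_(i < n) (if (i + r <= k)%N then G (i + r)%N else 0) =
  \sum_(i < minn n (k.+1 - r)) G (i + r)%N.
Proof.
elim: n => [|n IH]; first by rewrite min0n !big_ord0.
rewrite big_ord_recr /= IH.
case: (leqP (n + r) k) => h.
  have -> : minn n.+1 (k.+1 - r) = (minn n (k.+1 - r)).+1 by lia.
  have e : minn n (k.+1 - r) = n by lia.
  by rewrite big_ord_recr /= e.
have -> : minn n.+1 (k.+1 - r) = minn n (k.+1 - r) by lia.
by rewrite addr0.
Qed.

Lemma RL2 (G : nat -> V) r k :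
  \sum_(i < k.+1) (if (i + r <= k)%N then G (i + r)%N else 0) =
  \sum_(i < k.+1 - r) G (i + r)%N.
Proof. by rewrite RL2m; have -> : minn k.+1 (k.+1 - r) = (k.+1 - r)%N by lia. Qed.

End Reindex.

Section Alg.
Variables (R : realType) (H : lmodType R[i]) (ip : H -> H -> R[i]).
Hypothesis hip : is_inner_product ip.
Variable A : nat -> {linear H -> H}.
Variable k : nat.

Definition EPf n (e : nat -> H) : R[i] :=
  \sum_(i < k.+1) \sum_(j < k.+1) ip (Pw A n (i + j) (e j)) (Pw A n (i + j) (e i)).

Definition Phi a r (d : nat -> H) (i j : nat) : R[i] :=
  ip (Pw A a (i + j - r) (d j)) (Pw A a (i + j - r) (d i)).

Lemma ALG (EP : forall n e, 0 <= EPf n e)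
  (surj : forall n i z, exists y, Pw A n i y = z) p (z : nat -> H) :
  0 <= \sum_(i < k.+1) \sum_(j < k.+1)
        (if (2 * k <= p + j)%N && (2 * k <= p + i)%N
         then ip (Pw A (p + j - 2 * k) i (z j)) (Pw A (p + i - 2 * k) j (z i)) else 0).
Proof.
have [a ha] : exists a, a = (p - 2 * k)%N by eexists.
have [r hr] : exists r, r = (2 * k - p)%N by eexists.
have [d hd0] := boolp.choice (fun j => surj a (j - r)%N (z j)).
have hd : forall j, Pw A a (j - r) (d j) = z j := hd0.
have key : forall i j : nat,
  (if (2 * k <= p + j)%N && (2 * k <= p + i)%N
   then ip (Pw A (p + j - 2 * k) i (z j)) (Pw A (p + i - 2 * k) j (z i)) else 0) =
  if (r <= i)%N then (if (r <= j)%N then Phi a r d i j else 0) else 0.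
  move=> i j; case: (leqP r i) => hi; case: (leqP r j) => hj.
  - rewrite ifT; last by apply/andP; split; lia.
    rewrite -(hd j) -(hd i).
    have -> : (p + j - 2 * k = a + (j - r))%N by lia.
    have -> : (p + i - 2 * k = a + (i - r))%N by lia.
    rewrite !PwC /Phi.
    have -> : (j - r + i = i + j - r)%N by lia.
    by have -> : (i - r + j = i + j - r)%N by lia.
  1-3: have F : ((2 * k <= p + j)%N && (2 * k <= p + i)%N) = false by
         apply/negbTE/nandP; rewrite -!ltnNge; lia.
  1-3: by rewrite F.
have e1 : \sum_(i < k.+1) \sum_(j < k.+1)
        (if (2 * k <= p + j)%N && (2 * k <= p + i)%N
         then ip (Pw A (p + j - 2 * k) i (z j)) (Pw A (p + i - 2 * k) j (z i)) else 0)
   = \sum_(i < k.+1 - r) \sum_(j < k.+1 - r) Phi a r d (i + r) (j + r).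
  transitivity (\sum_(i < k.+1) (if (r <= i)%N then
       \sum_(j < k.+1) (if (r <= j)%N then Phi a r d i j else 0) else 0)).
    apply: eq_bigr => i _.
    case: (leqP r i) => hi.
      by apply: eq_bigr => j _; rewrite key hi.
    by rewrite big1 // => j _; rewrite key leqNgt hi.
  rewrite (RL1 (fun u => \sum_(j < k.+1) (if (r <= j)%N then Phi a r d u j else 0))).
  by apply: eq_bigr => i _; rewrite (RL1 (fun u => Phi a r d (i + r) u)).
set e := fun i : nat => if (i + r <= k)%N then Pw A a r (d (i + r)%N) else 0.
have e2 : EPf (a + r) e = \sum_(i < k.+1 - r) \sum_(j < k.+1 - r) Phi a r d (i + r) (j + r).
  rewrite /EPf.
  transitivity (\sum_(i < k.+1) (if (i + r <= k)%N then
       \sum_(j < k.+1) (if (j + r <= k)%N then Phi a r d (i + r) (j + r) else 0) else 0)).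
    apply: eq_bigr => i _.
    case: (leqP (i + r) k) => hi.
      apply: eq_bigr => j _; rewrite /e hi.
      case: (leqP (j + r) k) => hj.
        rewrite !PwC /Phi.
        by have -> : (r + (i + j) = i + r + (j + r) - r)%N by lia.
      by rewrite Pw0 ip0l.
    rewrite big1 // => j _.
    by rewrite /e (leqNgt (i + r)) hi /= Pw0 ip0r.
  rewrite (RL2 (fun u => \sum_(j < k.+1) (if (j + r <= k)%N then Phi a r d u (j + r) else 0))).
  by apply: eq_bigr => i _; rewrite (RL2 (fun u => Phi a r d (i + r) u)).
by rewrite e1 -e2.
Qed.

End Alg.

Section Main.
Variables (R : realType) (H : lmodType R[i]) (ip : H -> H -> R[i]).
Hypothesis hip : is_inner_product ip.
Variable A : nat -> {linear H -> H}.
Variable k : nat.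
Variable M : R.
Hypothesis hM : forall n x, hnorm ip (A n x) <= M * hnorm ip x.
Local Notation T := (wshift (fun n => A n)).

Definition HPf n (c : nat -> H) : R[i] :=
  \sum_(i < k.+1) \sum_(j < k.+1) ip (Pw A (n + j) i (c j)) (Pw A (n + i) j (c i)).

Lemma HP_EP n e : HPf n (fun j => Pw A n j (e j)) = EPf ip A k n e.
Proof.
by rewrite /HPf /EPf; apply: eq_bigr => i _; apply: eq_bigr => j _; rewrite !PwC (addnC j).
Qed.

Lemma khyp_HP : k_hyponormal ip k T -> forall S, l2_adjoint ip T S ->
  forall n c, 0 <= HPf n c.
Proof.
move=> hk S hS n c.
pose xt := fun (j : 'I_k.+1) (m : nat) => if m == (n + j)%N then c j else 0.
have hx : forall j, l2 ip (xt j).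
  by move=> j; apply: (l2_single hip (N := (n + j)%N)) => m hm; rewrite /xt (negbTE hm).
have E : \sum_(i < k.+1) \sum_(j < k.+1) l2ip ip (iter j S (iter i T (xt j))) (xt i) = HPf n c.
  apply: eq_bigr => i _; apply: eq_bigr => j _.
  rewrite (adj_iter hip hM hS _ (l2iterT hip hM (hx j)) (hx i)).
  by rewrite /xt !iterT_single (addnAC n j i) l2ip_single.
have h := hk S hS xt hx.
by rewrite -E; exact: h.
Qed.

Lemma kE_EP : kE_hyponormal ip k T -> forall S, l2_adjoint ip T S ->
  forall n e, 0 <= EPf ip A k n e.
Proof.
move=> hk S hS n e.
pose xt := fun (j : 'I_k.+1) (m : nat) => if m == n then e j else 0.
have hx : forall j, l2 ip (xt j).
  by move=> j; apply: (l2_single hip (N := n)) => m hm; rewrite /xt (negbTE hm).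
have E : \sum_(i < k.+1) \sum_(j < k.+1)
    l2ip ip (iter (i + j) S (iter (i + j) T (xt j))) (xt i) = EPf ip A k n e.
  apply: eq_bigr => i _; apply: eq_bigr => j _.
  rewrite (adj_iter hip hM hS _ (l2iterT hip hM (hx j)) (hx i)).
  by rewrite /xt !iterT_single l2ip_single.
have h := hk S hS xt hx.
by rewrite -E; exact: h.
Qed.

Lemma E_from_EP (EP : forall n e, 0 <= EPf ip A k n e) S (hS : l2_adjoint ip T S)
  (x : 'I_k.+1 -> nat -> H) (hx : forall i, l2 ip (x i)) :
  0 <= \sum_(i < k.+1) \sum_(j < k.+1)
         l2ip ip (iter (i + j) S (iter (i + j) T (x j))) (x i).
Proof.
pose a := fun (i j : 'I_k.+1) (n : nat) =>
  ip (Pw A n (i + j) (x j n)) (Pw A n (i + j) (x i n)).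
have step : forall i j : 'I_k.+1, ccvg (a i j) /\
    l2ip ip (iter (i + j) S (iter (i + j) T (x j))) (x i) = CL (a i j).
  move=> i j.
  rewrite (adj_iter hip hM hS _ (l2iterT hip hM (hx j)) (hx i)).
  pose t := fun m => ip (iter (i + j) T (x j) m) (iter (i + j) T (x i) m).
  have ht : ccvg t := ip_ccvg hip (l2iterT hip hM (hx j)) (l2iterT hip hM (hx i)).
  have h1 : forall m, a i j m = t (m + (i + j))%N.
    by move=> m; rewrite /t !iterT leq_addl addnK.
  have h2 : forall p, (p < i + j)%N -> t p = 0.
    by move=> p hp; rewrite /t iterT leqNgt hp /= ip0l.
  have [e1 e2] := CL_shift h1 h2.
  split; first by apply/e1.
  by rewrite (e2 ht).
have E : \sum_(i < k.+1) \sum_(j < k.+1)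
         l2ip ip (iter (i + j) S (iter (i + j) T (x j))) (x i) =
   \sum_(i < k.+1) \sum_(j < k.+1) CL (a i j).
  by apply: eq_bigr => i _; apply: eq_bigr => j _; rewrite (step i j).2.
have inner : forall i : 'I_k.+1, ccvg (fun n => \sum_(j < k.+1) a i j n) /\
   CL (fun n => \sum_(j < k.+1) a i j n) = \sum_(j < k.+1) CL (a i j).
  by move=> i; apply: CL_sum => j; exact: (step i j).1.
have [c2 e2] := @CL_sum R _ (index_enum 'I_k.+1) (fun i n => \sum_(j < k.+1) a i j n)
   (fun i => (inner i).1).
rewrite E.
have -> : \sum_(i < k.+1) \sum_(j < k.+1) CL (a i j) =
   \sum_(i < k.+1) CL (fun n => \sum_(j < k.+1) a i j n).
  by apply: eq_bigr => i _; rewrite (inner i).2.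
rewrite -e2; apply: CL_ge0 => // n.
have := EP n (fun j => x (inord j) n).
rewrite /EPf.
suff -> : \sum_(i < k.+1) \sum_(j < k.+1)
    ip (Pw A n (i + j) (x (inord j) n)) (Pw A n (i + j) (x (inord i) n)) =
    \sum_(i < k.+1) \sum_(j < k.+1) a i j n by [].
by apply: eq_bigr => i _; apply: eq_bigr => j _; rewrite /a !inord_val.
Qed.

Lemma term_eq (i j p : nat) (hi : (i <= k)%N) (hj : (j <= k)%N) (X Y : nat -> H) :
  (if (2 * k <= p + i + j)%N then
     ip (iter i T X (p + i + j - 2 * k)%N) (iter j T Y (p + i + j - 2 * k)%N) else 0) =
  (if (2 * k <= p + j)%N && (2 * k <= p + i)%N then
     ip (Pw A (p + j - 2 * k) i (X (p + j - 2 * k)%N)) (Pw A (p + i - 2 * k) j (Y (p + i - 2 * k)%N))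
   else 0).
Proof.
rewrite !iterT.
case: (leqP (2 * k) (p + j)) => c1.
  case: (leqP (2 * k) (p + i)) => c2.
    have c0 : (2 * k <= p + i + j)%N by lia.
    have d1 : (i <= p + i + j - 2 * k)%N by lia.
    have d2 : (j <= p + i + j - 2 * k)%N by lia.
    rewrite c0 d1 d2 /=.
    have -> : (p + i + j - 2 * k - i = p + j - 2 * k)%N by lia.
    by have -> : (p + i + j - 2 * k - j = p + i - 2 * k)%N by lia.
  rewrite andbF; case: ifP => // c0.
  have d2 : (j <= p + i + j - 2 * k)%N = false.
    by apply/negbTE; rewrite -ltnNge; lia.
  by rewrite d2 (ip0r hip).
case: ifP => // c0.
have d1 : (i <= p + i + j - 2 * k)%N = false.
  by apply/negbTE; rewrite -ltnNge; lia.
by rewrite d1 (ip0l hip).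
Qed.

Lemma Q_from_EP (EP : forall n e, 0 <= EPf ip A k n e)
  (surj : forall n i z, exists y, Pw A n i y = z) S (hS : l2_adjoint ip T S)
  (x : 'I_k.+1 -> nat -> H) (hx : forall i, l2 ip (x i)) :
  0 <= \sum_(i < k.+1) \sum_(j < k.+1) l2ip ip (iter j S (iter i T (x j))) (x i).
Proof.
pose b := fun (i j : 'I_k.+1) (p : nat) =>
  if (2 * k <= p + i + j)%N then
     ip (iter i T (x j) (p + i + j - 2 * k)%N) (iter j T (x i) (p + i + j - 2 * k)%N) else 0.
have step : forall i j : 'I_k.+1, ccvg (b i j) /\
    l2ip ip (iter j S (iter i T (x j))) (x i) = CL (b i j).
  move=> i j.
  rewrite (adj_iter hip hM hS _ (l2iterT hip hM (hx j)) (hx i)).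
  pose t := fun m => ip (iter i T (x j) m) (iter j T (x i) m).
  have ht : ccvg t := ip_ccvg hip (l2iterT hip hM (hx j)) (l2iterT hip hM (hx i)).
  have hi := ltn_ord i; have hj := ltn_ord j.
  have h1 : forall m, t m = b i j (m + (2 * k - (i + j)))%N.
    move=> m; rewrite /b.
    have c0 : (2 * k <= m + (2 * k - (i + j)) + i + j)%N by lia.
    rewrite c0.
    by have -> : (m + (2 * k - (i + j)) + i + j - 2 * k = m)%N by lia.
  have h2 : forall p, (p < 2 * k - (i + j))%N -> b i j p = 0.
    move=> p hp; rewrite /b.
    have c0 : (2 * k <= p + i + j)%N = false by apply/negbTE; rewrite -ltnNge; lia.
    by rewrite c0.
  have [e1 e2] := CL_shift h1 h2.
  have hb : ccvg (b i j) by apply/e1.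
  by split; last rewrite -(e2 hb).
have E : \sum_(i < k.+1) \sum_(j < k.+1) l2ip ip (iter j S (iter i T (x j))) (x i) =
   \sum_(i < k.+1) \sum_(j < k.+1) CL (b i j).
  by apply: eq_bigr => i _; apply: eq_bigr => j _; rewrite (step i j).2.
have inner : forall i : 'I_k.+1, ccvg (fun n => \sum_(j < k.+1) b i j n) /\
   CL (fun n => \sum_(j < k.+1) b i j n) = \sum_(j < k.+1) CL (b i j).
  by move=> i; apply: CL_sum => j; exact: (step i j).1.
have [c2 e2] := @CL_sum R _ (index_enum 'I_k.+1) (fun i n => \sum_(j < k.+1) b i j n)
   (fun i => (inner i).1).
rewrite E.
have -> : \sum_(i < k.+1) \sum_(j < k.+1) CL (b i j) =
   \sum_(i < k.+1) CL (fun n => \sum_(j < k.+1) b i j n).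
  by apply: eq_bigr => i _; rewrite (inner i).2.
rewrite -e2; apply: CL_ge0 => // p.
have := ALG hip EP surj p (fun j => x (inord j) (p + j - 2 * k)%N).
suff -> : \sum_(i < k.+1) \sum_(j < k.+1)
    (if (2 * k <= p + j)%N && (2 * k <= p + i)%N
     then ip (Pw A (p + j - 2 * k) i (x (inord j) (p + j - 2 * k)%N))
             (Pw A (p + i - 2 * k) j (x (inord i) (p + i - 2 * k)%N)) else 0) =
    \sum_(i < k.+1) \sum_(j < k.+1) b i j p by [].
apply: eq_bigr => i _; apply: eq_bigr => j _.
rewrite /b term_eq ?(inord_val) //; by rewrite -ltnS.
Qed.

End Main.

Unset Implicit Arguments.

Theorem mainTheorem1 (R : realType) (H : lmodType R[i]) (ip : H -> H -> R[i])
  (hH : complex_separable_hilbert ip)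
  (A : nat -> {linear H -> H})
  (hA : forall n, [/\ bounded_op ip (A n), positive_op ip (A n)
                    & invertible_op ip (A n)])
  (hsup : exists M : R, forall n x, hnorm ip (A n x) <= M * hnorm ip x)
  (k : nat) (hk : (1 <= k)%N) :
  k_hyponormal ip k (wshift (fun n => A n)) <->
  kE_hyponormal ip k (wshift (fun n => A n)).
Proof.
case: hH => hip _ _.
case: hsup => M hM.
have surj : forall n i z, exists y, Pw A n i y = z.
  by apply: (@Pw_surj _ _ ip) => n; case: (hA n) => _ _ h.
split => [hk1 | hE] S hS x hx.
- have HP := khyp_HP hip hM hk1 hS.
  have EP : forall n e, 0 <= EPf ip A k n e.
    by move=> n e; rewrite -HP_EP; apply: HP.
  exact: (E_from_EP hip hM EP hS hx).
- have EP := kE_EP hip hM hE hS.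
  exact: (Q_from_EP hip hM EP surj hS hx).
Qed.
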